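(* Let $(X,Y)$ be a random pair with $X\in\mathcal{X}\subset\mathbb{R}^d$ and $Y\in\{0,1\}$. Let $\hat f_0,\hat f_1$ be estimates of the class-conditional densities of $X\mid(Y=0)$ and $X\mid(Y=1)$, and let $\hat\pi_0,\hat\pi_1=1-\hat\pi_0$ be estimates of the class priors, and define $$\hat\eta(X)=\frac{\hat f_1(X)\hat\pi_1}{\hat f_0(X)\hat\pi_0+\hat f_1(X)\hat\pi_1}.$$ Let $\hat\phi_{\mathrm{NP}}(X)=\mathbb{1}(\hat\eta(X)>t_{\mathrm{NP}})$ be a level-$\alpha$ NP classifier with threshold $0\le t_{\mathrm{NP}}\le 1$. Assign the type I error cost $$c_0=c_0(t_{\mathrm{NP}},\hat\pi_0)=\frac{t_{\mathrm{NP}}\hat\pi_0}{(1-t_{\mathrm{NP}})(1-\hat\pi_0)+t_{\mathrm{NP}}\hat\pi_0},\qquad c_1=1-c_0,$$ and define the rebalanced score $$\tilde\eta(X)=\frac{\hat f_1(X)c_1}{\hat f_0(X)c_0+\hat f_1(X)c_1}.$$ Then the rebalancing cost-sensitive classifier $\hat\phi^{\mathrm r}_{\mathrm{CS}}(X)=\mathbb{1}(\tilde\eta(X)>1/2)$ coincides with $\hat\phi_{\mathrm{NP}}(X)$ for all $X$. That is, $R_0(\hat\phi^{\mathrm r}_{\mathrm{CS}})\le\alpha$ with high probability.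
   Context: For a classifier $\phi:\mathcal{X}\to\{0,1\}$, the population type I error is $R_0(\phi)=\mathbb{P}(\phi(X)=1\mid Y=0)$ and the type II error is $R_1(\phi)=\mathbb{P}(\phi(X)=0\mid Y=1)$. In the rebalancing cost-sensitive approach, the misclassification costs $c_0$ (of type I error) and $c_1$ (of type II error), normalized so that $c_0+c_1=1$, replace the estimated class priors in the plug-in posterior. A level-$\alpha$ NP (Neyman–Pearson) classifier is a data-dependent classifier whose population type I error satisfies $R_0\le\alpha$ with high probability (i.e., with probability at least $1-\delta$ for a prespecified violation rate $\delta$), here obtained by thresholding the score $\hat\eta$ at a data-selected threshold $t_{\mathrm{NP}}$ (an order statistic of scores on a left-out class-0 sample). *)

(* Defs.v *)
From mathcomp Require Import all_boot all_order all_algebra.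
Set Implicit Arguments. Unset Strict Implicit. Unset Printing Implicit Defensive.
Import Order.TTheory GRing.Theory Num.Theory.
Local Open Scope ring_scope.

Section Defs.
Variables (R : realFieldType) (T : Type).

Definition eta_hat (f0 f1 : T -> R) (pi0 : R) (x : T) : R :=
  f1 x * (1 - pi0) / (f0 x * pi0 + f1 x * (1 - pi0)).

Definition phi_NP (f0 f1 : T -> R) (pi0 tNP : R) (x : T) : bool :=
  tNP < eta_hat f0 f1 pi0 x.

Definition cost0 (tNP pi0 : R) : R :=
  tNP * pi0 / ((1 - tNP) * (1 - pi0) + tNP * pi0).

Definition eta_tilde (f0 f1 : T -> R) (c0 : R) (x : T) : R :=
  f1 x * (1 - c0) / (f0 x * c0 + f1 x * (1 - c0)).

Definition phi_CS_r (f0 f1 : T -> R) (pi0 tNP : R) (x : T) : bool :=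
  2^-1 < eta_tilde f0 f1 (cost0 tNP pi0) x.

End Defs.

(* Main.v *)
Require Import Defs.
From mathcomp Require Import all_boot all_order all_algebra.
From mathcomp Require Import ring lra.
Import Order.TTheory GRing.Theory Num.Theory.
Local Open Scope ring_scope.

Lemma key (R : realFieldType) (s u v : R) : 0 <= s -> s <= 1 -> 0 <= u -> 0 <= v ->
  (s < u / (v + u)) = (s * v < (1 - s) * u).
Proof.
move=> s0 s1 u0 v0.
have [H|H] := eqVneq (v + u) 0.
  rewrite H invr0 mulr0.
  have : (v == 0) && (u == 0) by rewrite -paddr_eq0 // H.
  case/andP => /eqP -> /eqP ->; rewrite !mulr0.
  by apply/idP/idP => h; lra.
have vu : 0 < v + u by rewrite lt_def H addr_ge0.
rewrite ltr_pdivlMr //.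
by apply/idP/idP => h; nra.
Qed.

Theorem proposition2 (R : realFieldType) (d : nat)
  (f0 f1 : 'rV[R]_d -> R) (pi0 tNP : R)
  (hf0 : forall x, 0 <= f0 x) (hf1 : forall x, 0 <= f1 x)
  (hpi0 : 0 < pi0 < 1) (ht : 0 <= tNP <= 1) :
  forall x : 'rV[R]_d, phi_CS_r f0 f1 pi0 tNP x = phi_NP f0 f1 pi0 tNP x.
Proof.
move=> x; case/andP: hpi0 => p0 p1; case/andP: ht => t0 t1.
have a0 := hf1 x; have b0 := hf0 x.
rewrite /phi_CS_r /phi_NP /eta_tilde /eta_hat.
set a := f1 x; set b := f0 x; set D := (1 - tNP) * (1 - pi0) + tNP * pi0.
have D0 : 0 < D.
  rewrite /D; have [->|tp] := eqVneq tNP 0; first by lra.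
  have : 0 < tNP by rewrite lt_def tp t0.
  move=> tpos; nra.
have c0E : cost0 tNP pi0 = tNP * pi0 / D by [].
have c1E : 1 - cost0 tNP pi0 = (1 - tNP) * (1 - pi0) / D.
  rewrite c0E; apply/eqP; rewrite subr_eq -mulrDl; apply/eqP; rewrite /D mulfV ?gt_eqF //; ring.
have c00 : 0 <= cost0 tNP pi0 by rewrite c0E; apply: divr_ge0; [apply: mulr_ge0 => //; exact: ltW | exact: ltW].
have c01 : 0 <= 1 - cost0 tNP pi0 by rewrite c1E; apply: divr_ge0; [apply: mulr_ge0; rewrite subr_ge0 //; exact: ltW | exact: ltW].
have h2 : 1 - 2^-1 = 2^-1 :> R by field.
have i2 : 0 < 2^-1 :> R by rewrite invr_gt0 ltr0n.
have p1' : 0 <= 1 - pi0 by rewrite subr_ge0 ltW.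
rewrite key; last 4 first.
- exact: ltW.
- lra.
- exact: mulr_ge0.
- exact: mulr_ge0.
have u0 : 0 <= a * (1 - pi0) by exact: mulr_ge0.
have v0 : 0 <= b * pi0 by exact: mulr_ge0 b0 (ltW p0).
rewrite key //.
rewrite c1E c0E h2.
rewrite -!mulrA ltr_pM2l //.
rewrite !mulrA ltr_pM2r ?invr_gt0 //.
by rewrite (mulrC b) (mulrC a) (mulrAC (1 - tNP)).
Qed.
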